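(* Let $T=(\{T_g\}_{g\in G},\{\gamma_{g,h}\}_{g,h\in G},u)$ be a partial action of a group $G$ on a (strict) monoidal category $\mathcal{C}$ generated by central idempotent objects $\{\mathbb{1}_g\}_{g\in G}$, and let $\Phi\colon\mathcal{C}\to[G,\mathcal{C}]$, $\bullet$ and $\mathcal{T}_g$ be as described in the context. Then: (1) for all objects $X,Y$ of $\mathcal{C}$ and $g\in G$ there are natural isomorphisms $$\Phi(X)\bullet\mathcal{T}_g(\Phi(Y))\cong\Phi\big(X\otimes T_g(\mathbb{1}_{g^{-1}}\otimes Y)\big)\quad\text{and}\quad\mathcal{T}_g(\Phi(X))\bullet\Phi(Y)\cong\Phi\big(T_g(\mathbb{1}_{g^{-1}}\otimes X)\otimes Y\big);$$ (2) for all objects $X,Y$ of $\mathcal{C}$ and $g,h\in G$ there is a natural isomorphism $$\mathcal{T}_g(\Phi(X))\bullet\mathcal{T}_h(\Phi(Y))\cong\mathcal{T}_g\Phi\big(X\otimes T_{g^{-1}h}(\mathbb{1}_{h^{-1}g}\otimes Y)\big).$$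
   Context: Central idempotent: an object $e$ with an isomorphism $\Phi_e\colon e\otimes e\to e$ and a natural isomorphism $\sigma^e\colon e\otimes-\Rightarrow-\otimes e$ satisfying $\Phi_e(e\otimes\Phi_e)=\Phi_e(\Phi_e\otimes e)$, $\Phi_e\sigma^e_e=\Phi_e$, $(A\otimes\Phi_e)(\sigma^e_A\otimes e)(e\otimes\sigma^e_A)=\sigma^e_A(\Phi_e\otimes A)$, $\sigma^e_{A\otimes B}=(A\otimes\sigma^e_B)(\sigma^e_A\otimes B)$. For a subcategory $\mathcal{D}$, $\overline{\mathcal{D}}$ is the smallest subcategory containing $\mathcal{D}$ and closed under isomorphisms; $e\otimes\mathcal{C}$ is the subcategory of objects $e\otimes X$ and morphisms $e\otimes f$; $\overline{e\otimes\mathcal{C}}$ is an ideal and a monoidal category with unit $e$. A partial action of $G$ on $\mathcal{C}$ generated by central idempotents $\{\mathbb{1}_g\}$: ideals $\mathcal{C}_g=\overline{\mathbb{1}_g\otimes\mathcal{C}}$ with $\mathbb{1}_e=\mathbb{1}$; monoidal equivalences $(T_g,J^g)\colon\mathcal{C}_{g^{-1}}\to\mathcal{C}_g$ (with unit isomorphisms $\varphi^g\colon\mathbb{1}_g\to T_g(\mathbb{1}_{g^{-1}})$) whose restrictions to $\mathcal{C}_{g^{-1}}\cap\mathcal{C}_h$ are monoidal equivalences onto $\mathcal{C}_g\cap\mathcal{C}_{gh}$; a natural isomorphism of semigroupal functors $u\colon\mathrm{Id}_{\mathcal{C}}\Rightarrow T_e$; natural isomorphisms $\gamma_{g,h}\colon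 T_gT_h\Rightarrow T_{gh}$ on $\mathcal{C}_{h^{-1}}\cap\mathcal{C}_{h^{-1}g^{-1}}$ compatible with the $J$'s; with the associativity condition $(\gamma_{gh,k})_X(\gamma_{g,h})_{T_kX}=(\gamma_{g,hk})_XT_g((\gamma_{h,k})_X)$ and the unit conditions ($u_{T_gX}$ inverse to $(\gamma_{e,g})_X$, $T_g(u_X)$ inverse to $(\gamma_{g,e})_X$). Regard $G$ as a discrete category $\underline{G}$ (objects the elements of $G$, only identity morphisms) and let $[G,\mathcal{C}]$ be the category of functors $\underline{G}\to\mathcal{C}$ with natural transformations. It has the pointwise tensor product $(F_1\bullet F_2)(g)=F_1(g)\otimes F_2(g)$, $(\alpha_1\bullet\alpha_2)_g=(\alpha_1)_g\otimes(\alpha_2)_g$. For $g\in G$ and $F\in[G,\mathcal{C}]$ define $\mathcal{T}_g(F)(h)=F(hg)$. Define $\Phi\colon\mathcal{C}\to[G,\mathcal{C}]$ by $\Phi(X)(g)=T_g(\mathbb{1}_{g^{-1}}\otimes X)$ and $\Phi(f)_g=T_g(\mathbb{1}_{g^{-1}}\otimes f)$. *)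

(* Defs.v *)
From Stdlib Require Import ClassicalEpsilon.
Set Implicit Arguments.
Unset Strict Implicit.

Record Group := {
  gcar :> Type;
  gmul : gcar -> gcar -> gcar;
  gone : gcar;
  ginv : gcar -> gcar;
  gmulA : forall a b c, gmul a (gmul b c) = gmul (gmul a b) c;
  gmul1l : forall a, gmul gone a = a;
  gmul1r : forall a, gmul a gone = a;
  gmulVl : forall a, gmul (ginv a) a = gone;
  gmulVr : forall a, gmul a (ginv a) = gone }.
Arguments gmul {g}.
Arguments gone {g}.
Arguments ginv {g}.

Record MonCat := {
  Obj :> Type;
  Hom : Obj -> Obj -> Type;
  idm : forall A, Hom A A;
  comp : forall A B D, Hom B D -> Hom A B -> Hom A D;
  tens : Obj -> Obj -> Obj;
  tensm : forall A B A' B', Hom A B -> Hom A' B' -> Hom (tens A A') (tens B B');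
  munit : Obj;
  alpha : forall A B D, Hom (tens (tens A B) D) (tens A (tens B D));
  alphai : forall A B D, Hom (tens A (tens B D)) (tens (tens A B) D);
  lam : forall A, Hom (tens munit A) A;
  lami : forall A, Hom A (tens munit A);
  rho : forall A, Hom (tens A munit) A;
  rhoi : forall A, Hom A (tens A munit) }.
Arguments Hom {m}.
Arguments idm {m}.
Arguments comp {m A B D}.
Arguments tens {m}.
Arguments tensm {m A B A' B'}.
Arguments munit m : assert.
Arguments alpha {m}.
Arguments alphai {m}.
Arguments lam {m}.
Arguments lami {m}.
Arguments rho {m}.
Arguments rhoi {m}.

Declare Scope moncat_scope.
Delimit Scope moncat_scope with MC.
Open Scope moncat_scope.
Notation "g ∘ f" := (comp g f) (at level 40, left associativity) : moncat_scope.
Notation "A ⊗ B" := (tens A B) (at level 33, left associativity) : moncat_scope.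
Notation "f ⊗ₘ g" := (tensm f g) (at level 33, left associativity) : moncat_scope.

Record is_moncat (C : MonCat) : Prop := {
  comp_idl : forall (A B : C) (f : Hom A B), idm B ∘ f = f;
  comp_idr : forall (A B : C) (f : Hom A B), f ∘ idm A = f;
  compA : forall (A B D E : C) (f : Hom A B) (g : Hom B D) (h : Hom D E),
      h ∘ (g ∘ f) = (h ∘ g) ∘ f;
  tensm_id : forall A B : C, idm A ⊗ₘ idm B = idm (A ⊗ B);
  tensm_comp : forall (A B D A' B' D' : C) (f : Hom A B) (g : Hom B D)
      (f' : Hom A' B') (g' : Hom B' D'),
      (g ∘ f) ⊗ₘ (g' ∘ f') = (g ⊗ₘ g') ∘ (f ⊗ₘ f');
  alpha_inv1 : forall A B D : C, alphai A B D ∘ alpha A B D = idm _;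
  alpha_inv2 : forall A B D : C, alpha A B D ∘ alphai A B D = idm _;
  alpha_nat : forall (A A' B B' D D' : C) (f : Hom A A') (g : Hom B B') (h : Hom D D'),
      alpha A' B' D' ∘ ((f ⊗ₘ g) ⊗ₘ h) = (f ⊗ₘ (g ⊗ₘ h)) ∘ alpha A B D;
  lam_inv1 : forall A : C, lami A ∘ lam A = idm _;
  lam_inv2 : forall A : C, lam A ∘ lami A = idm _;
  lam_nat : forall (A B : C) (f : Hom A B), lam B ∘ (idm (munit C) ⊗ₘ f) = f ∘ lam A;
  rho_inv1 : forall A : C, rhoi A ∘ rho A = idm _;
  rho_inv2 : forall A : C, rho A ∘ rhoi A = idm _;
  rho_nat : forall (A B : C) (f : Hom A B), rho B ∘ (f ⊗ₘ idm (munit C)) = f ∘ rho A;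
  pentagon : forall A B D E : C,
      alpha A B (D ⊗ E) ∘ alpha (A ⊗ B) D E
      = (idm A ⊗ₘ alpha B D E) ∘ alpha A (B ⊗ D) E ∘ (alpha A B D ⊗ₘ idm E);
  triangle : forall A B : C,
      (idm A ⊗ₘ lam B) ∘ alpha A (munit C) B = rho A ⊗ₘ idm B }.

Definition hcast {C : MonCat} {A B : C} (e : A = B) : Hom A B :=
  match e in _ = B' return Hom A B' with eq_refl => idm A end.

Definition strict (C : MonCat) : Prop :=
  exists (ea : forall A B D : C, A ⊗ B ⊗ D = A ⊗ (B ⊗ D))
         (el : forall A : C, munit C ⊗ A = A)
         (er : forall A : C, A ⊗ munit C = A),
    (forall A B D, alpha A B D = hcast (ea A B D)) /\
    (forall A, lam A = hcast (el A)) /\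
    (forall A, rho A = hcast (er A)).

Definition is_iso {C : MonCat} {A B : C} (f : Hom A B) : Prop :=
  exists g : Hom B A, g ∘ f = idm A /\ f ∘ g = idm B.

Definition isoP {C : MonCat} (A B : C) : Prop := exists f : Hom A B, is_iso f.

Definition bij {T U : Type} (F : T -> U) : Prop :=
  exists F' : U -> T, (forall x, F' (F x) = x) /\ (forall y, F (F' y) = y).

Record CIdem (C : MonCat) (e : C) := {
  ci_Phi : Hom (e ⊗ e) e;
  ci_Phii : Hom e (e ⊗ e);
  ci_sig : forall A : C, Hom (e ⊗ A) (A ⊗ e);
  ci_sigi : forall A : C, Hom (A ⊗ e) (e ⊗ A) }.

Definition is_cidem {C : MonCat} {e : C} (d : CIdem e) : Prop :=
  let Phi := ci_Phi d in let sig := ci_sig d in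
  (ci_Phii d ∘ Phi = idm _ /\ Phi ∘ ci_Phii d = idm e) /\
  (forall A, ci_sigi d A ∘ sig A = idm _ /\ sig A ∘ ci_sigi d A = idm _) /\
  (forall (A B : C) (f : Hom A B), (f ⊗ₘ idm e) ∘ sig A = sig B ∘ (idm e ⊗ₘ f)) /\
  Phi ∘ (idm e ⊗ₘ Phi) ∘ alpha e e e = Phi ∘ (Phi ⊗ₘ idm e) /\
  Phi ∘ sig e = Phi /\
  (forall A : C,
     (idm A ⊗ₘ Phi) ∘ alpha A e e ∘ (sig A ⊗ₘ idm e) ∘ alphai e A e
       ∘ (idm e ⊗ₘ sig A) ∘ alpha e e A
     = sig A ∘ (Phi ⊗ₘ idm A)) /\
  (forall A B : C,
     sig (A ⊗ B) = alphai A B e ∘ (idm A ⊗ₘ sig B) ∘ alpha A e B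
                     ∘ (sig A ⊗ₘ idm B) ∘ alphai e A B).

Section Ideal.
Context {C : MonCat}.

(* objects of overline(e ⊗ C) (a full subcategory) *)
Definition Cid (e X : C) : Prop := exists Y : C, isoP X (e ⊗ Y).

Lemma cid_in (L : is_moncat C) (e X : C) : Cid e (e ⊗ X).
Proof.
  exists X, (idm _), (idm _); split; apply (comp_idl L).
Qed.

(* chosen presentation X ≅ e ⊗ Y (used only to write the unitors) *)
Definition cid_sig {e X : C} (h : Cid e X) : {Y : C | isoP X (e ⊗ Y)} :=
  constructive_indefinite_description _ h.
Definition cid_obj {e X : C} (h : Cid e X) : C := proj1_sig (cid_sig h).
Definition cid_fsig {e X : C} (h : Cid e X) : {f : Hom X (e ⊗ cid_obj h) | is_iso f} :=
  constructive_indefinite_description _ (proj2_sig (cid_sig h)).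
Definition cid_f {e X : C} (h : Cid e X) : Hom X (e ⊗ cid_obj h) := proj1_sig (cid_fsig h).
Definition cid_gsig {e X : C} (h : Cid e X) :
  {g : Hom (e ⊗ cid_obj h) X | g ∘ cid_f h = idm X /\ cid_f h ∘ g = idm _} :=
  constructive_indefinite_description _ (proj2_sig (cid_fsig h)).
Definition cid_g {e X : C} (h : Cid e X) : Hom (e ⊗ cid_obj h) X := proj1_sig (cid_gsig h).

(* left and right unitors of the monoidal category (overline(e ⊗ C), ⊗, e) *)
Definition lunit {e : C} (d : CIdem e) {X : C} (h : Cid e X) : Hom (e ⊗ X) X :=
  cid_g h ∘ (ci_Phi d ⊗ₘ idm (cid_obj h)) ∘ alphai e e (cid_obj h) ∘ (idm e ⊗ₘ cid_f h).
Definition runit {e : C} (d : CIdem e) {X : C} (h : Cid e X) : Hom (X ⊗ e) X :=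
  cid_g h ∘ (ci_Phi d ⊗ₘ idm (cid_obj h)) ∘ alphai e e (cid_obj h)
    ∘ (idm e ⊗ₘ ci_sigi d (cid_obj h)) ∘ alpha e (cid_obj h) e ∘ (cid_f h ⊗ₘ idm e).
End Ideal.

Record PAData (C : MonCat) (G : Group) := {
  pa_one : G -> C;
  pa_ci : forall g, CIdem (pa_one g);
  pa_T : G -> C -> C;                                (* T_g on objects of C_{g^-1} *)
  pa_Tm : forall (g : G) (X Y : C), Cid (pa_one (ginv g)) X -> Cid (pa_one (ginv g)) Y ->
          Hom X Y -> Hom (pa_T g X) (pa_T g Y);
  pa_J : forall (g : G) (X Y : C), Hom (pa_T g X ⊗ pa_T g Y) (pa_T g (X ⊗ Y));
  pa_phi : forall g : G, Hom (pa_one g) (pa_T g (pa_one (ginv g)));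
  pa_u : forall X : C, Hom X (pa_T gone X);
  pa_gamma : forall (g h : G) (X : C), Hom (pa_T g (pa_T h X)) (pa_T (gmul g h) X) }.

Arguments pa_one {C G}.
Arguments pa_ci {C G}.
Arguments pa_T {C G}.
Arguments pa_Tm {C G} p g {X Y}.
Arguments pa_J {C G}.
Arguments pa_phi {C G}.
Arguments pa_u {C G}.
Arguments pa_gamma {C G}.

Section PartialAction.
Context {C : MonCat} {G : Group} (d : PAData C G).

Local Notation one := (pa_one d).
Local Notation Cg g := (Cid (pa_one d g)).
Local Notation T := (pa_T d).
Local Notation Tm := (pa_Tm d).
Local Notation J := (pa_J d).
Local Notation u := (pa_u d).
Local Notation gam := (pa_gamma d).
Local Notation ci g := (pa_ci d g).

Definition tcast {a b : G} (e : a = b) (X : C) : Hom (T a X) (T b X) :=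
  match e in _ = b' return Hom (T a X) (T b' X) with eq_refl => idm _ end.

Record is_partial_action : Prop := {
  pa_ci_ok : forall g, is_cidem (ci g);
  pa_one_e : one gone = munit C;
  pa_T_in : forall (g : G) (X : C), Cg (ginv g) X -> Cg g (T g X);
  pa_Tm_id : forall (g : G) (X : C) (h1 h2 : Cg (ginv g) X), Tm g h1 h2 (idm X) = idm (T g X);
  pa_Tm_comp : forall (g : G) (X Y Z : C) hX hY hZ (f : Hom X Y) (k : Hom Y Z),
      Tm g hX hZ (k ∘ f) = Tm g hY hZ k ∘ Tm g hX hY f;
  pa_Tm_ff : forall (g : G) (X Y : C) (hX : Cg (ginv g) X) (hY : Cg (ginv g) Y),
      bij (Tm g hX hY);
  pa_T_esurj : forall (g : G) (Z : C), Cg g Z -> exists X, Cg (ginv g) X /\ isoP (T g X) Z;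
  pa_J_iso : forall (g : G) (X Y : C), Cg (ginv g) X -> Cg (ginv g) Y -> is_iso (J g X Y);
  pa_J_nat : forall (g : G) (X X' Y Y' : C) hX hX' hY hY' (hXY : Cg (ginv g) (X ⊗ Y))
      (hXY' : Cg (ginv g) (X' ⊗ Y')) (f : Hom X X') (f' : Hom Y Y'),
      Tm g hXY hXY' (f ⊗ₘ f') ∘ J g X Y = J g X' Y' ∘ (Tm g hX hX' f ⊗ₘ Tm g hY hY' f');
  pa_J_assoc : forall (g : G) (X Y Z : C), Cg (ginv g) X -> Cg (ginv g) Y -> Cg (ginv g) Z ->
      forall (h1 : Cg (ginv g) (X ⊗ Y ⊗ Z)) (h2 : Cg (ginv g) (X ⊗ (Y ⊗ Z))),
      Tm g h1 h2 (alpha X Y Z) ∘ J g (X ⊗ Y) Z ∘ (J g X Y ⊗ₘ idm (T g Z))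
      = J g X (Y ⊗ Z) ∘ (idm (T g X) ⊗ₘ J g Y Z) ∘ alpha (T g X) (T g Y) (T g Z);
  pa_phi_iso : forall g : G, is_iso (pa_phi d g);
  pa_unit_l : forall (g : G) (X : C) (hX : Cg (ginv g) X) (h1 : Cg (ginv g) (one (ginv g) ⊗ X))
      (hTX : Cg g (T g X)),
      Tm g h1 hX (lunit (ci (ginv g)) hX) ∘ J g (one (ginv g)) X ∘ (pa_phi d g ⊗ₘ idm (T g X))
      = lunit (ci g) hTX;
  pa_unit_r : forall (g : G) (X : C) (hX : Cg (ginv g) X) (h1 : Cg (ginv g) (X ⊗ one (ginv g)))
      (hTX : Cg g (T g X)),
      Tm g h1 hX (runit (ci (ginv g)) hX) ∘ J g X (one (ginv g)) ∘ (idm (T g X) ⊗ₘ pa_phi d g)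
      = runit (ci g) hTX;
  pa_restr : forall (g h : G) (X : C), Cg (ginv g) X -> Cg h X -> Cg (gmul g h) (T g X);
  pa_restr_esurj : forall (g h : G) (Z : C), Cg g Z -> Cg (gmul g h) Z ->
      exists X, Cg (ginv g) X /\ Cg h X /\ isoP (T g X) Z;
  pa_u_iso : forall X : C, Cg (ginv gone) X -> is_iso (u X);
  pa_u_nat : forall (X Y : C) (hX : Cg (ginv gone) X) (hY : Cg (ginv gone) Y) (f : Hom X Y),
      Tm gone hX hY f ∘ u X = u Y ∘ f;
  pa_u_mon : forall X Y : C, u (X ⊗ Y) = J gone X Y ∘ (u X ⊗ₘ u Y);
  pa_gamma_iso : forall (g h : G) (X : C), Cg (ginv h) X -> Cg (gmul (ginv h) (ginv g)) X ->
      is_iso (gam g h X);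
  pa_gamma_nat : forall (g h : G) (X Y : C),
      Cg (ginv h) X -> Cg (gmul (ginv h) (ginv g)) X ->
      forall (hX : Cg (ginv h) X) (hY : Cg (ginv h) Y), Cg (gmul (ginv h) (ginv g)) Y ->
      forall (p1 : Cg (ginv g) (T h X)) (p2 : Cg (ginv g) (T h Y))
             (q1 : Cg (ginv (gmul g h)) X) (q2 : Cg (ginv (gmul g h)) Y) (f : Hom X Y),
      gam g h Y ∘ Tm g p1 p2 (Tm h hX hY f) = Tm (gmul g h) q1 q2 f ∘ gam g h X;
  pa_gamma_J : forall (g h : G) (X Y : C),
      Cg (ginv h) X -> Cg (gmul (ginv h) (ginv g)) X ->
      Cg (ginv h) Y -> Cg (gmul (ginv h) (ginv g)) Y ->
      forall (p1 : Cg (ginv g) (T h X ⊗ T h Y)) (p2 : Cg (ginv g) (T h (X ⊗ Y))),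
      gam g h (X ⊗ Y) ∘ Tm g p1 p2 (J h X Y) ∘ J g (T h X) (T h Y)
      = J (gmul g h) X Y ∘ (gam g h X ⊗ₘ gam g h Y);
  pa_gamma_assoc : forall (g h k : G) (X : C),
      Cg (ginv k) X -> Cg (gmul (ginv k) (ginv h)) X ->
      Cg (gmul (gmul (ginv k) (ginv h)) (ginv g)) X ->
      forall (p1 : Cg (ginv g) (T h (T k X))) (p2 : Cg (ginv g) (T (gmul h k) X)),
      gam (gmul g h) k X ∘ gam g h (T k X)
      = tcast (gmulA g h k) X ∘ gam g (gmul h k) X ∘ Tm g p1 p2 (gam h k X);
  pa_unit_e_l : forall (g : G) (X : C), Cg (ginv g) X ->
      tcast (gmul1l g) X ∘ gam gone g X ∘ u (T g X) = idm (T g X) /\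
      u (T g X) ∘ tcast (gmul1l g) X ∘ gam gone g X = idm (T gone (T g X));
  pa_unit_e_r : forall (g : G) (X : C), Cg (ginv g) X ->
      forall (p1 : Cg (ginv g) X) (p2 : Cg (ginv g) (T gone X)),
      tcast (gmul1r g) X ∘ gam g gone X ∘ Tm g p1 p2 (u X) = idm (T g X) /\
      Tm g p1 p2 (u X) ∘ tcast (gmul1r g) X ∘ gam g gone X = idm (T g (T gone X)) }.

Definition GHom (F F' : G -> C) : Type := forall h : G, Hom (F h) (F' h).

Definition bul (F1 F2 : G -> C) : G -> C := fun h => F1 h ⊗ F2 h.
Definition bulm {F1 F1' F2 F2' : G -> C} (a1 : GHom F1 F1') (a2 : GHom F2 F2') :
  GHom (bul F1 F2) (bul F1' F2') := fun h => a1 h ⊗ₘ a2 h.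

Definition TT (g : G) (F : G -> C) : G -> C := fun h => F (gmul h g).
Definition TTm (g : G) {F F' : G -> C} (a : GHom F F') : GHom (TT g F) (TT g F') :=
  fun h => a (gmul h g).

Definition PhiO (X : C) : G -> C := fun h => T h (one (ginv h) ⊗ X).
Definition PhiM (L : is_moncat C) {X Y : C} (f : Hom X Y) : GHom (PhiO X) (PhiO Y) :=
  fun h => Tm h (cid_in L (one (ginv h)) X) (cid_in L (one (ginv h)) Y) (idm _ ⊗ₘ f).

End PartialAction.

Definition nat_iso2 {C : MonCat} {G : Group} (Fo Go : C -> C -> G -> C)
  (Fm : forall X X' Y Y' : C, Hom X X' -> Hom Y Y' -> GHom (Fo X Y) (Fo X' Y'))
  (Gm : forall X X' Y Y' : C, Hom X X' -> Hom Y Y' -> GHom (Go X Y) (Go X' Y')) : Prop :=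
  exists eta : forall X Y : C, GHom (Fo X Y) (Go X Y),
    (forall X Y h, is_iso (eta X Y h)) /\
    (forall (X X' Y Y' : C) (f : Hom X X') (f' : Hom Y Y') h,
        Gm X X' Y Y' f f' h ∘ eta X Y h = eta X' Y' h ∘ Fm X X' Y Y' f f' h).
Arguments nat_iso2 {C G} Fo Go Fm Gm.

(* Main.v *)
Require Import Defs.
From Stdlib Require Import ProofIrrelevance ClassicalEpsilon.
Set Implicit Arguments. Unset Strict Implicit.

Existing Class is_moncat.
Section Basics.
Context {C : MonCat} {L : is_moncat C}.

Lemma cA (A B D E : C) (f : Hom A B) (g : Hom B D) (h : Hom D E) :
  h ∘ (g ∘ f) = (h ∘ g) ∘ f.
Proof. apply (compA L). Qed.
Lemma cidl (A B : C) (f : Hom A B) : idm B ∘ f = f. Proof. apply (comp_idl L). Qed.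
Lemma cidr (A B : C) (f : Hom A B) : f ∘ idm A = f. Proof. apply (comp_idr L). Qed.
Lemma tcomp (A B D A' B' D' : C) (f : Hom A B) (g : Hom B D)
      (f' : Hom A' B') (g' : Hom B' D') :
      (g ∘ f) ⊗ₘ (g' ∘ f') = (g ⊗ₘ g') ∘ (f ⊗ₘ f').
Proof. apply (tensm_comp L). Qed.
Lemma tid (A B : C) : idm A ⊗ₘ idm B = idm (A ⊗ B). Proof. apply (tensm_id L). Qed.

Lemma inv_cancel (A B D : C) (f : Hom A B) (g : Hom B A) (x : Hom A D) :
  g ∘ f = idm A -> x ∘ g ∘ f = x.
Proof. intros H. rewrite <- cA, H, cidr. reflexivity. Qed.

Lemma iso_id (A : C) : is_iso (idm A).
Proof. exists (idm A). rewrite cidl. auto. Qed.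

Lemma iso_comp (A B D : C) (f : Hom A B) (g : Hom B D) :
  is_iso f -> is_iso g -> is_iso (g ∘ f).
Proof.
  intros [f' [H1 H2]] [g' [H3 H4]]. exists (f' ∘ g'). split.
  - rewrite cA. rewrite <- (cA g g' f'). rewrite H3, cidr. exact H1.
  - rewrite cA. rewrite <- (cA f' f g). rewrite H2, cidr. exact H4.
Qed.

Lemma iso_tens (A B A' B' : C) (f : Hom A B) (g : Hom A' B') :
  is_iso f -> is_iso g -> is_iso (f ⊗ₘ g).
Proof.
  intros [f' [H1 H2]] [g' [H3 H4]]. exists (f' ⊗ₘ g'). split.
  - rewrite <- tcomp, H1, H3. apply tid.
  - rewrite <- tcomp, H2, H4. apply tid.
Qed.

Lemma iso_inv (A B : C) (f : Hom A B) (g : Hom B A) :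
  g ∘ f = idm A -> f ∘ g = idm B -> is_iso g.
Proof. intros H1 H2. exists f. auto. Qed.

Lemma isoP_refl (A : C) : isoP A A.
Proof. exists (idm A). apply iso_id. Qed.
Lemma isoP_sym (A B : C) : isoP A B -> isoP B A.
Proof. intros [f [g [H1 H2]]]. exists g. exists f. auto. Qed.
Lemma isoP_trans (A B D : C) : isoP A B -> isoP B D -> isoP A D.
Proof. intros [f Hf] [g Hg]. exists (g ∘ f). apply iso_comp; auto. Qed.
Lemma isoP_tens (A B A' B' : C) : isoP A B -> isoP A' B' -> isoP (A ⊗ A') (B ⊗ B').
Proof. intros [f Hf] [g Hg]. exists (f ⊗ₘ g). apply iso_tens; auto. Qed.
Lemma isoP_of (A B : C) (f : Hom A B) : is_iso f -> isoP A B.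
Proof. intros H; exists f; auto. Qed.

Lemma alpha_iso (A B D : C) : is_iso (alpha A B D).
Proof. exists (alphai A B D). split; [apply (alpha_inv1 L) | apply (alpha_inv2 L)]. Qed.
Lemma alphai_iso (A B D : C) : is_iso (alphai A B D).
Proof. exists (alpha A B D). split; [apply (alpha_inv2 L) | apply (alpha_inv1 L)]. Qed.

Lemma cid_iso (e X X' : C) : isoP X X' -> Cid e X -> Cid e X'.
Proof. intros H [Y HY]. exists Y. eapply isoP_trans; [apply isoP_sym; exact H| exact HY]. Qed.

Lemma cid_tl (e X Y : C) : Cid e X -> Cid e (X ⊗ Y).
Proof.
  intros [Z HZ]. exists (Z ⊗ Y). eapply isoP_trans.
  - apply isoP_tens; [exact HZ | apply isoP_refl].
  - apply isoP_of with (alpha _ _ _). apply alpha_iso.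
Qed.
End Basics.

Section Grp.
Context (G : Group).
Lemma ginv_unique (x y : G) : gmul x y = gone -> y = ginv x.
Proof.
  intros H. rewrite <- (gmul1l y). rewrite <- (gmulVl x).
  rewrite <- (gmulA (g:=G)). rewrite H. apply (gmul1r (g:=G)).
Qed.
Lemma ginv_mul (h g : G) : ginv (gmul h g) = gmul (ginv g) (ginv h).
Proof.
  symmetry. apply ginv_unique. rewrite (gmulA (g:=G)). rewrite <- (gmulA h g).
  rewrite (gmulVr g), (gmul1r (g:=G)). apply (gmulVr (g:=G)).
Qed.
Lemma g_mul_inv_mul (h g : G) : gmul g (ginv (gmul h g)) = ginv h.
Proof.
  rewrite ginv_mul, (gmulA (g:=G)), (gmulVr (g:=G)), (gmul1l (g:=G)). reflexivity.
Qed.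
Lemma g_mul_mul_inv (h g : G) : gmul (gmul h g) (ginv g) = h.
Proof. rewrite <- (gmulA (g:=G)), (gmulVr (g:=G)), (gmul1r (g:=G)). reflexivity. Qed.
Lemma g_reassoc (k g h : G) : gmul k h = gmul (gmul k g) (gmul (ginv g) h).
Proof.
  rewrite <- (gmulA (g:=G)). rewrite (gmulA g), (gmulVr (g:=G)), (gmul1l (g:=G)). reflexivity.
Qed.
End Grp.

Section PA.
Existing Class is_partial_action.
Context {C : MonCat} {L : is_moncat C} {G : Group} {d : PAData C G}
        {Hd : is_partial_action d}.

Local Notation one := (pa_one d).
Local Notation T := (pa_T d).
Local Notation Tm := (pa_Tm d).
Local Notation J := (pa_J d).
Local Notation Cg x := (Cid (pa_one d x)).
Local Notation Phi x := (ci_Phi (pa_ci d x)).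
Local Notation sig x := (ci_sig (pa_ci d x)).
Local Notation sigi x := (ci_sigi (pa_ci d x)).

Lemma Phi_iso x : is_iso (Phi x).
Proof.
  destruct (pa_ci_ok Hd x) as [[H1 H2] _]. exists (ci_Phii (pa_ci d x)). auto.
Qed.
Lemma sig_inv x (A : C) : sigi x A ∘ sig x A = idm _ /\ sig x A ∘ sigi x A = idm _.
Proof. destruct (pa_ci_ok Hd x) as [_ [H _]]. apply H. Qed.
Lemma sig_iso x (A : C) : is_iso (sig x A).
Proof. destruct (sig_inv x A). exists (sigi x A). auto. Qed.
Lemma sigi_iso x (A : C) : is_iso (sigi x A).
Proof. destruct (sig_inv x A). exists (sig x A). auto. Qed.
Lemma sig_nat x (A B : C) (f : Hom A B) :
  (f ⊗ₘ idm (one x)) ∘ sig x A = sig x B ∘ (idm (one x) ⊗ₘ f).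
Proof. destruct (pa_ci_ok Hd x) as [_ [_ [H _]]]. apply H. Qed.

Lemma cid_one x : Cg x (one x).
Proof. exists (one x). apply isoP_sym. apply (isoP_of (Phi_iso x)). Qed.

Lemma cid_tr x (X Y : C) : Cg x Y -> Cg x (X ⊗ Y).
Proof.
  intros [Z HZ]. exists (X ⊗ Z).
  eapply isoP_trans. { apply isoP_tens. apply isoP_refl. exact HZ. }
  eapply isoP_trans. { apply (isoP_of (alphai_iso _ _ _)). }
  eapply isoP_trans. { apply isoP_tens. apply (isoP_of (sigi_iso x X)). apply isoP_refl. }
  apply (isoP_of (alpha_iso _ _ _)).
Qed.

Lemma cid_eq x y (X : C) : x = y -> Cg x X -> Cg y X.
Proof. intros ->; auto. Qed.

Lemma absL x (X : C) : Cg x X -> isoP (one x ⊗ X) X.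
Proof.
  intros [Y HY].
  eapply isoP_trans. { apply isoP_tens. apply isoP_refl. exact HY. }
  eapply isoP_trans. { apply (isoP_of (alphai_iso _ _ _)). }
  eapply isoP_trans. { apply isoP_tens. apply (isoP_of (Phi_iso x)). apply isoP_refl. }
  apply isoP_sym; exact HY.
Qed.

Lemma absR x (X : C) : Cg x X -> isoP (X ⊗ one x) X.
Proof.
  intros H. eapply isoP_trans. apply (isoP_of (sigi_iso x X)). apply absL; auto.
Qed.

Lemma Tm_irr k (X Y : C) (w1 w1' : Cg (ginv k) X) (w2 w2' : Cg (ginv k) Y) (f : Hom X Y) :
  Tm k w1 w2 f = Tm k w1' w2' f.
Proof. rewrite (proof_irrelevance _ w1 w1'), (proof_irrelevance _ w2 w2'). reflexivity. Qed.

Lemma Tm_iso k (X Y : C) (w1 : Cg (ginv k) X) (w2 : Cg (ginv k) Y) (f : Hom X Y) :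
  is_iso f -> is_iso (Tm k w1 w2 f).
Proof.
  intros [g [H1 H2]]. exists (Tm k w2 w1 g). split.
  - rewrite <- (pa_Tm_comp Hd). rewrite H1. apply (pa_Tm_id Hd).
  - rewrite <- (pa_Tm_comp Hd). rewrite H2. apply (pa_Tm_id Hd).
Qed.

Lemma isoP_T k (X Y : C) : Cg (ginv k) X -> Cg (ginv k) Y -> isoP X Y -> isoP (T k X) (T k Y).
Proof. intros w1 w2 [f Hf]. exists (Tm k w1 w2 f). apply Tm_iso; auto. Qed.

Lemma UF k m : isoP (T k (one (ginv k) ⊗ one m)) (one k ⊗ one (gmul k m)).
Proof.
  assert (hZk : Cg k (one k ⊗ one (gmul k m))) by apply (cid_in L).
  assert (hZkm : Cg (gmul k m) (one k ⊗ one (gmul k m))) by (apply cid_tr; apply cid_one).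
  destruct (pa_restr_esurj Hd (g:=k) (h:=m) hZk hZkm) as [X [hX1 [hX2 hXZ]]].
  assert (hU1 : Cg (ginv k) (one (ginv k) ⊗ one m)) by apply (cid_in L).
  assert (hU2 : Cg m (one (ginv k) ⊗ one m)) by (apply cid_tr; apply cid_one).
  pose proof (pa_T_in Hd hU1) as Uk.
  pose proof (pa_restr Hd hU1 hU2) as Ukm.
  set (U := T k (one (ginv k) ⊗ one m)) in *.
  assert (S1 : isoP (U ⊗ T k X) (T k ((one (ginv k) ⊗ one m) ⊗ X))).
  { apply isoP_of with (J k _ _). apply (pa_J_iso Hd); auto. }
  assert (S2 : isoP ((one (ginv k) ⊗ one m) ⊗ X) X).
  { eapply isoP_trans. apply (isoP_of (alpha_iso _ _ _)).
    eapply isoP_trans. apply isoP_tens. apply isoP_refl. apply absL; auto.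
    apply absL; auto. }
  assert (S3 : isoP (U ⊗ (one k ⊗ one (gmul k m))) (one k ⊗ one (gmul k m))).
  { eapply isoP_trans. apply isoP_tens. apply isoP_refl. apply isoP_sym; exact hXZ.
    eapply isoP_trans. exact S1.
    eapply isoP_trans. apply isoP_T. apply (cid_tl (e:=one (ginv k))); auto. exact hX1. exact S2.
    exact hXZ. }
  eapply isoP_trans; [|exact S3].
  apply isoP_sym.
  eapply isoP_trans. apply (isoP_of (alphai_iso _ _ _)).
  eapply isoP_trans. apply isoP_tens. apply absR; auto. apply isoP_refl.
  apply absR; auto.
Qed.
End PA.

Section Nat.
Context {C : MonCat} {L : is_moncat C} (I : Type) (M : I -> I -> Type).

Record Fun := MkF { fo : I -> C; fm : forall i j, M i j -> Hom (fo i) (fo j) }.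

Definition niso (F H : Fun) : Prop :=
  exists eta : forall i, Hom (fo F i) (fo H i),
    (forall i, is_iso (eta i)) /\
    (forall i j (m : M i j), fm H m ∘ eta i = eta j ∘ fm F m).

Lemma nrefl F : niso F F.
Proof.
  exists (fun i => idm _). split. intros; apply iso_id.
  intros. rewrite cidl, cidr. reflexivity.
Qed.

Lemma next (fo0 : I -> C) (fm1 fm2 : forall i j, M i j -> Hom (fo0 i) (fo0 j)) :
  (forall i j m, fm1 i j m = fm2 i j m) -> niso (MkF fm1) (MkF fm2).
Proof.
  intros E. exists (fun i => idm _). split. intros; apply iso_id.
  intros; simpl. rewrite cidl, cidr, E. reflexivity.
Qed.

Lemma nsym F H : niso F H -> niso H F.
Proof.
  intros [eta [Hi Hn]].
  set (inv := fun i => constructive_indefinite_description _ (Hi i)).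
  exists (fun i => proj1_sig (inv i)). split.
  - intros i. destruct (inv i) as [g [H1 H2]]. simpl. exists (eta i). auto.
  - intros i j m. destruct (inv i) as [gi [H1 H2]]. destruct (inv j) as [gj [H3 H4]]. simpl.
    rewrite <- (cidl (fm F m ∘ gi)), <- H3.
    repeat rewrite cA.
    rewrite <- (cA (fm F m) (eta j) gj), <- Hn.
    rewrite (cA (eta i) (fm H m) gj).
    rewrite <- cA, H2, cidr. reflexivity.
Qed.

Lemma ntrans F H K : niso F H -> niso H K -> niso F K.
Proof.
  intros [e1 [I1 N1]] [e2 [I2 N2]]. exists (fun i => e2 i ∘ e1 i). split.
  - intros; apply iso_comp; auto.
  - intros i j m. rewrite cA, N2, <- cA, N1, cA. reflexivity.
Qed.

Definition ftens (F H : Fun) : Fun :=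
  @MkF (fun i => fo F i ⊗ fo H i) (fun i j m => fm F m ⊗ₘ fm H m).
Definition fconst (A : C) : Fun := @MkF (fun _ => A) (fun _ _ _ => idm A).

Lemma ntens F F' H H' : niso F H -> niso F' H' -> niso (ftens F F') (ftens H H').
Proof.
  intros [e1 [I1 N1]] [e2 [I2 N2]]. exists (fun i => e1 i ⊗ₘ e2 i). split.
  - intros; apply iso_tens; auto.
  - intros i j m; simpl. rewrite <- !tcomp, N1, N2. reflexivity.
Qed.

Lemma nalpha F H K : niso (ftens (ftens F H) K) (ftens F (ftens H K)).
Proof.
  exists (fun i => alpha _ _ _). split.
  - intros; apply alpha_iso.
  - intros i j m; simpl. symmetry. apply (alpha_nat L).
Qed.

Lemma nconst (A B : C) : isoP A B -> niso (fconst A) (fconst B).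
Proof.
  intros [f Hf]. exists (fun _ => f). split. auto.
  intros; simpl. rewrite cidl, cidr. reflexivity.
Qed.

Lemma nconst_tid (A B : C) : niso (ftens (fconst A) (fconst B)) (fconst (A ⊗ B)).
Proof.
  exists (fun _ => idm _). split. intros; apply iso_id.
  intros; simpl. rewrite tid, cidl. reflexivity.
Qed.

End Nat.

Section PAN.
Context {C : MonCat} {L : is_moncat C} {G : Group} {d : PAData C G}
        {Hd : is_partial_action d} (I : Type) (M : I -> I -> Type).

Local Notation one := (pa_one d).
Local Notation T := (pa_T d).
Local Notation Tm := (pa_Tm d).
Local Notation J := (pa_J d).
Local Notation Cg x := (Cid (pa_one d x)).
Local Notation Fun := (@Fun C I M).
Local Notation niso := (@niso C I M).
Local Notation fconst := (@fconst C I M).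

Definition fT (k : G) (F : Fun) (w : forall i, Cg (ginv k) (fo F i)) : Fun :=
  @MkF C I M (fun i => T k (fo F i)) (fun i j m => Tm k (w i) (w j) (fm F m)).

Lemma nfT_irr k F w w' : niso (@fT k F w) (@fT k F w').
Proof. apply next. intros. apply Tm_irr. Qed.

Lemma nTm k F H wF wH : niso F H -> niso (@fT k F wF) (@fT k H wH).
Proof.
  intros [e [Hi Hn]]. exists (fun i => Tm k (wF i) (wH i) (e i)). split.
  - intros; apply Tm_iso; auto.
  - intros i j m; simpl. rewrite <- !(pa_Tm_comp Hd). rewrite Hn. reflexivity.
Qed.

Lemma nJ k F H wF wH wFH :
  niso (ftens (@fT k F wF) (@fT k H wH)) (@fT k (ftens F H) wFH).
Proof.
  exists (fun i => J k (fo F i) (fo H i)). split.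
  - intros; apply (pa_J_iso Hd); auto.
  - intros i j m; simpl. apply (pa_J_nat Hd).
Qed.

Lemma nTconst k A w : niso (@fT k (fconst A) w) (fconst (T k A)).
Proof.
  exists (fun _ => idm _). split. intros; apply iso_id.
  intros; simpl. rewrite (pa_Tm_id Hd), !cidl. reflexivity.
Qed.

Lemma nTconst2 k A B w : niso (@fT k (ftens (fconst A) (fconst B)) w) (fconst (T k (A ⊗ B))).
Proof.
  exists (fun _ => idm _). split. intros; apply iso_id.
  intros; simpl. rewrite tid, (pa_Tm_id Hd), !cidl. reflexivity.
Qed.

Lemma nsig x F : niso (ftens (fconst (one x)) F) (ftens F (fconst (one x))).
Proof.
  exists (fun i => ci_sig (pa_ci d x) (fo F i)). split.
  - intros; apply sig_iso.
  - intros i j m; simpl. apply sig_nat.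
Qed.

Lemma ngam x y W w1 w3 w4 (wa : forall i, Cg (gmul (ginv y) (ginv x)) (fo W i)) :
  niso (@fT x (@fT y W w1) w3) (@fT (gmul x y) W w4).
Proof.
  exists (fun i => pa_gamma d x y (fo W i)). split.
  - intros; apply (pa_gamma_iso Hd); auto.
  - intros i j m; simpl. symmetry. apply (pa_gamma_nat Hd); auto.
Qed.

Lemma nPhiL x F :
  niso (ftens (fconst (one x)) (ftens (fconst (one x)) F)) (ftens (fconst (one x)) F).
Proof.
  eapply ntrans. apply nsym, nalpha.
  eapply ntrans. apply ntens. apply nconst_tid. apply nrefl.
  apply ntens. apply nconst. apply (isoP_of (Phi_iso x)). apply nrefl.
Qed.

Definition fTe (k : G) (F : Fun) : Fun :=
  @fT k (ftens (fconst (one (ginv k))) F) (fun i => cid_in L _ _).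

Lemma lamT k F : niso (ftens (fconst (one k)) (fTe k F)) (fTe k F).
Proof.
  eapply ntrans. apply ntens. apply nconst. apply (isoP_of (pa_phi_iso Hd k)). apply nrefl.
  eapply ntrans. apply ntens. apply nsym. apply (@nTconst k _ (fun _ => cid_one _)). apply nrefl.
  eapply ntrans. unshelve apply nJ. intros; apply (cid_in L).
  apply nTm. apply nPhiL.
Qed.

Lemma rhoT k F : niso (ftens (fTe k F) (fconst (one k))) (fTe k F).
Proof. eapply ntrans. apply nsym, nsig. apply lamT. Qed.

Lemma inner x F W :
  niso (ftens (ftens (fconst (one x)) F) (ftens (fconst (one x)) W))
       (ftens (fconst (one x)) (ftens F W)).
Proof.
  eapply ntrans. apply nalpha.
  eapply ntrans. apply ntens. apply nrefl. apply nsym, nalpha.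
  eapply ntrans. apply ntens. apply nrefl. apply ntens. apply nsym, nsig. apply nrefl.
  eapply ntrans. apply ntens. apply nrefl. apply nalpha.
  apply nPhiL.
Qed.

Lemma stepC x y Y :
  niso (ftens (fconst (one x)) (ftens (fconst (one y)) Y))
       (ftens (ftens (fconst (one y)) (fconst (one x))) (ftens (fconst (one y)) Y)).
Proof.
  eapply ntrans. apply ntens. apply nrefl. apply nsym, nPhiL.
  eapply ntrans. apply nsym, nalpha.
  apply ntens. apply nsym, nsig. apply nrefl.
Qed.

Lemma stepC' x y Y :
  niso (ftens (fconst (one x)) (ftens (fconst (one y)) Y))
       (ftens (ftens (fconst (one x)) (fconst (one y))) (ftens (fconst (one x)) Y)).
Proof.
  eapply ntrans. apply nsym, nPhiL.
  eapply ntrans. apply ntens. apply nrefl. apply nsym, nalpha.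
  eapply ntrans. apply ntens. apply nrefl. apply ntens. apply nsym, nsig. apply nrefl.
  eapply ntrans. apply ntens. apply nrefl. apply nalpha.
  apply nsym, nalpha.
Qed.

End PAN.

Section Chains.
Context {C : MonCat} {L : is_moncat C} {G : Group} {d : PAData C G}
        {Hd : is_partial_action d} (I : Type) (M : I -> I -> Type).

Local Notation one := (pa_one d).
Local Notation T := (pa_T d).
Local Notation Cg x := (Cid (pa_one d x)).
Local Notation Fun := (@Fun C I M).
Local Notation niso := (@niso C I M).
Local Notation fconst := (@fconst C I M).
Local Notation fTe := (@fTe C L G d I M).

Ltac memb := intros; simpl; first [ apply (cid_in L) | apply cid_tl; memb | apply cid_tr; memb | apply cid_one ].

Lemma stepA h g (Y : Fun) wW :
  niso (ftens (fconst (one (ginv h))) (fTe g Y))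
       (@fT C G d I M g (ftens (fconst (one (ginv g))) (ftens (fconst (one (ginv (gmul h g)))) Y)) wW).
Proof.
  apply nsym.
  eapply ntrans. eapply nTm. apply stepC'.
  eapply ntrans. apply nsym. eapply nJ.
  eapply ntrans. eapply ntens. apply nTconst2. apply nrefl.
  eapply ntrans. apply ntens. apply nconst.
  { pose proof (UF (Hd:=Hd) g (ginv (gmul h g))) as U. rewrite g_mul_inv_mul in U. exact U. }
  apply nrefl.
  eapply ntrans. apply ntens. apply nsym, nconst_tid. apply nrefl.
  eapply ntrans. apply ntens. apply nsig. apply nrefl.
  eapply ntrans. apply nalpha.
  apply ntens. apply nrefl. apply lamT.
Unshelve. all: try memb.
Qed.

Lemma Kiso h g (Y : Fun) :
  niso (ftens (fconst (one h)) (fTe (gmul h g) Y)) (fTe h (fTe g Y)).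
Proof.
  set (Wc := ftens (fconst (one (ginv g))) (ftens (fconst (one (ginv (gmul h g)))) Y)).
  assert (wW : forall i, Cg (ginv g) (fo Wc i)) by memb.
  assert (w4 : forall i, Cg (ginv (gmul h g)) (fo Wc i)) by memb.
  assert (wTW : forall i, Cg (ginv h) (T g (fo Wc i))).
  { intros i. eapply cid_eq. apply g_mul_inv_mul. apply (pa_restr Hd). apply wW. apply w4. }
  assert (wa : forall i, Cg (gmul (ginv g) (ginv h)) (fo Wc i)).
  { intros i. eapply cid_eq. apply ginv_mul. apply w4. }
  apply nsym.
  eapply ntrans. apply (nTm (H := @fT C G d I M g Wc wW) _ wTW). apply (stepA wW).
  eapply ntrans. apply (ngam _ w4 wa).
  eapply ntrans. eapply nTm. apply stepC.
  eapply ntrans. apply nsym. eapply nJ.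
  eapply ntrans. eapply ntens. apply nTconst2. apply nrefl.
  eapply ntrans. apply ntens. apply nconst.
  { pose proof (UF (Hd:=Hd) (gmul h g) (ginv g)) as U. rewrite g_mul_mul_inv in U. exact U. }
  apply nrefl.
  eapply ntrans. apply ntens. apply nsym, nconst_tid. apply nrefl.
  eapply ntrans. apply ntens. apply nsig. apply nrefl.
  eapply ntrans. apply nalpha.
  apply ntens. apply nrefl. apply lamT.
Unshelve. all: try memb.
Qed.

Lemma chain1 h g (X Y : Fun) :
  niso (ftens (fTe h X) (fTe (gmul h g) Y)) (fTe h (ftens X (fTe g Y))).
Proof.
  eapply ntrans. apply ntens. apply nsym, rhoT. apply nrefl.
  eapply ntrans. apply nalpha.
  eapply ntrans. apply ntens. apply nrefl. apply Kiso.
  eapply ntrans. eapply nJ.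
  apply nTm. apply inner.
Unshelve. all: try memb.
Qed.

Lemma chain2 h g (X Y : Fun) :
  niso (ftens (fTe (gmul h g) X) (fTe h Y)) (fTe h (ftens (fTe g X) Y)).
Proof.
  eapply ntrans. apply ntens. apply nrefl. apply nsym, lamT.
  eapply ntrans. apply nsym, nalpha.
  eapply ntrans. apply ntens. apply nsym, nsig. apply nrefl.
  eapply ntrans. apply ntens. apply Kiso. apply nrefl.
  eapply ntrans. eapply nJ.
  apply nTm. apply inner.
Unshelve. all: try memb.
Qed.
End Chains.

Definition PM (C : MonCat) (p q : C * C) : Type := (Hom (fst p) (fst q) * Hom (snd p) (snd q))%type.

Lemma nat_of {C : MonCat} {G : Group} (Fo Go : C -> C -> G -> C)
  (Fm : forall X X' Y Y' : C, Hom X X' -> Hom Y Y' -> GHom (Fo X Y) (Fo X' Y'))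
  (Gm : forall X X' Y Y' : C, Hom X X' -> Hom Y Y' -> GHom (Go X Y) (Go X' Y')) :
  (forall h : G, niso (@MkF C _ (@PM C) (fun p => Fo (fst p) (snd p) h)
                        (fun p q m => Fm _ _ _ _ (fst m) (snd m) h))
                     (@MkF C _ (@PM C) (fun p => Go (fst p) (snd p) h)
                        (fun p q m => Gm _ _ _ _ (fst m) (snd m) h))) ->
  nat_iso2 Fo Go Fm Gm.
Proof.
  intros H.
  set (E := fun h => constructive_indefinite_description _ (H h)).
  exists (fun X Y h => proj1_sig (E h) (X, Y)). split.
  - intros X Y h. destruct (E h) as [e [Hi Hn]]. apply (Hi (X, Y)).
  - intros X X' Y Y' f f' h. destruct (E h) as [e [Hi Hn]]. simpl.
    apply (Hn (X, Y) (X', Y') (f, f')).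
Qed.

Theorem lemma5p2 (C : MonCat) (L : is_moncat C) (HS : strict C) (G : Group)
  (d : PAData C G) (Hd : is_partial_action d) :
  (forall g : G,
     nat_iso2 (fun X Y => bul (PhiO d X) (TT g (PhiO d Y)))
              (fun X Y => PhiO d (X ⊗ PhiO d Y g))
              (fun X X' Y Y' f f' => bulm (PhiM d L f) (TTm g (PhiM d L f')))
              (fun X X' Y Y' f f' => PhiM d L (f ⊗ₘ PhiM d L f' g))
     /\
     nat_iso2 (fun X Y => bul (TT g (PhiO d X)) (PhiO d Y))
              (fun X Y => PhiO d (PhiO d X g ⊗ Y))
              (fun X X' Y Y' f f' => bulm (TTm g (PhiM d L f)) (PhiM d L f'))
              (fun X X' Y Y' f f' => PhiM d L (PhiM d L f g ⊗ₘ f'))) /\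
  (forall g h : G,
     nat_iso2 (fun X Y => bul (TT g (PhiO d X)) (TT h (PhiO d Y)))
              (fun X Y => TT g (PhiO d (X ⊗ PhiO d Y (gmul (ginv g) h))))
              (fun X X' Y Y' f f' => bulm (TTm g (PhiM d L f)) (TTm h (PhiM d L f')))
              (fun X X' Y Y' f f' =>
                 TTm g (PhiM d L (f ⊗ₘ PhiM d L f' (gmul (ginv g) h))))).
Proof.
  set (fX := @MkF C _ (@PM C) (fun p => fst p) (fun p q m => fst m)).
  set (fY := @MkF C _ (@PM C) (fun p => snd p) (fun p q m => snd m)).
  split; [intro g; split | intros g h].
  - apply nat_of. intro h. exact (chain1 (L:=L) (Hd:=Hd) h g fX fY).
  - apply nat_of. intro h. exact (chain2 (L:=L) (Hd:=Hd) h g fX fY).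
  - apply nat_of. intro k.
    pose proof (chain1 (L:=L) (Hd:=Hd) (gmul k g) (gmul (ginv g) h) fX fY) as H.
    rewrite <- g_reassoc in H. exact H.
Qed.
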